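(* For every $0\le i\le s$, the subspace $\mathfrak{n}_i=\mathrm{span}\{y_\eta:\eta\in A_i\}$ is a Lie subalgebra of $\mathfrak{n}$, and consequently $\mathcal{L}_i=\mathfrak{n}_i/\mathfrak{m}$ is a Lie subalgebra of $\mathcal{L}=\mathfrak{n}/\mathfrak{m}$.
   Context: $K$ is a field of characteristic zero, $n\ge 2$, $\mathfrak{n}$ is the Lie algebra of strictly lower triangular $n\times n$ matrices over $K$, $A=\{(i,j): n\ge i>j\ge 1\}$, $y_{ij}=E_{ij}$ (matrix units), $y_\xi=y_{ij}$ for $\xi=(i,j)$. $M\subset A$ is such that $\mathfrak{m}=\mathrm{span}\{y_\xi:\xi\in M\}$ is an ideal of $\mathfrak{n}$. Order on $A$: $(i,j)\succ(i',j')$ iff $j<j'$, or $j=j'$ and $i>i'$. Diagram construction: Step 0: fill the places of $M$ with $\bullet$. Step $i\ge1$ (while unfilled places of $A$ remain): put $\otimes$ on the $\succ$-greatest unfilled place $(k,t)$, call it $\xi_i$; then for each $a$ with $t<a<k$ such that both $(k,a)$ and $(a,t)$ are unfilled, put $-$ on $(k,a)$ and $+$ on $(a,t)$ (if one of them is already filled, leave the other unchanged). $s$ is the total number of steps with $\otimes$. $B_i$ is the set of places of $A$ still unfilled after step $i$ (so $B_0=A\setminus M$, $B_s=\emptyset$), and $A_i=B_i\sqcup M$. *)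

(* Defs.v *)
From HB Require Import structures.
From mathcomp Require Import all_boot all_order all_algebra.
Set Implicit Arguments. Unset Strict Implicit. Unset Printing Implicit Defensive.
Import Order.TTheory GRing.Theory Num.Theory.
Local Open Scope ring_scope.

(* Places (i,j) are pairs of 0-based indices in 'I_n (paper's (i+1,j+1)). *)
Definition place (n : nat) := ('I_n * 'I_n)%type.

(* A = {(i,j) : i > j}: the places of strictly lower triangular matrices. *)
Definition Aset (n : nat) : {set place n} := [set p : place n | (p.2 < p.1)%N].

Definition succ_pl (n : nat) (p q : place n) : bool :=
  ((p.2 < q.2)%N || ((p.2 == q.2) && (q.1 < p.1)%N)).

Definition greatest (n : nat) (B : {set place n}) : option (place n) :=
  [pick xi in B | [forall eta in B, (eta == xi) || succ_pl xi eta]].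

(* Places getting a '-' or '+' when xi = (k,t) is marked, with B unfilled:
   (k,a) and (a,t) for t < a < k with both (k,a), (a,t) unfilled. *)
Definition marked (n : nat) (B : {set place n}) (xi : place n) : {set place n} :=
  [set p : place n | [exists a : 'I_n,
     [&& (xi.2 < a)%N, (a < xi.1)%N, (xi.1, a) \in B, (a, xi.2) \in B &
         (p == (xi.1, a)) || (p == (a, xi.2))]]].

(* One step of the diagram construction, acting on the set of unfilled places. *)
Definition step (n : nat) (B : {set place n}) : {set place n} :=
  match greatest B with
  | Some xi => (B :\ xi) :\: marked B xi
  | None => B
  end.

Definition Bset (n : nat) (M : {set place n}) (i : nat) : {set place n} :=
  iter i (@step n) (Aset n :\: M).

Definition Aiset (n : nat) (M : {set place n}) (i : nat) : {set place n} :=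
  Bset M i :|: M.

(* s = number of steps: the least i with B_i empty (B_{#|A|} is empty). *)
Definition nsteps (n : nat) (M : {set place n}) : nat :=
  find (fun i => Bset M i == set0) (iota 0 (#|Aset n|.+1)).

(* span{ y_xi : xi in S } with y_(i,j) = E_ij the matrix unit. *)
Definition in_span (K : fieldType) (n : nat) (S : {set place n}) (x : 'M[K]_n) : Prop :=
  exists c : place n -> K, x = \sum_(p in S) c p *: delta_mx p.1 p.2.
Arguments in_span K {n} S x.

Definition lie_br (K : fieldType) (n : nat) (x y : 'M[K]_n) : 'M[K]_n :=
  x *m y - y *m x.

Definition is_lie_subalg (K : fieldType) (n : nat) (S T : {set place n}) : Prop :=
  (forall x : 'M[K]_n, in_span K S x -> in_span K T x) /\
  (forall x y : 'M[K]_n, in_span K S x -> in_span K S y -> in_span K S (lie_br x y)).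

Definition is_lie_ideal (K : fieldType) (n : nat) (S T : {set place n}) : Prop :=
  (forall x : 'M[K]_n, in_span K S x -> in_span K T x) /\
  (forall x y : 'M[K]_n, in_span K T x -> in_span K S y -> in_span K S (lie_br x y)).
Arguments is_lie_subalg K {n} S T.
Arguments is_lie_ideal K {n} S T.

(* Main.v *)
Require Import Defs.
From HB Require Import structures.
From mathcomp Require Import all_boot all_order all_algebra.
Import GRing.Theory.
Set Implicit Arguments. Unset Strict Implicit.

Section Helpers.
Local Open Scope ring_scope.

Lemma delta_entry (K : fieldType) n (p1 p2 i j : 'I_n) :
  (delta_mx p1 p2 : 'M[K]_n) i j = ((p1, p2) == (i, j))%:R.
Proof. by rewrite mxE xpair_eqE [p1 == i]eq_sym [p2 == j]eq_sym. Qed.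

Lemma span_iff (K : fieldType) n (S : {set place n}) (x : 'M[K]_n) :
  in_span K S x <-> (forall i j, (i,j) \notin S -> x i j = 0).
Proof.
split.
- move=> [c ->] i j hij; rewrite summxE; apply: big1 => p hp.
  have hne : p != (i,j) by apply: contraNneq hij => <-.
  case: p hp hne => p1 p2 /= hp hne.
  by rewrite mxE delta_entry (negbTE hne) mulr0.
- move=> h; exists (fun p => x p.1 p.2); apply/matrixP => i j.
  rewrite summxE; case hij: ((i,j) \in S).
  + rewrite (bigD1 (i,j)) //= big1 ?addr0.
      by rewrite mxE delta_entry eqxx mulr1.
    case=> p1 p2 /andP[_ hne]; by rewrite mxE delta_entry (negbTE hne) mulr0.
  + rewrite h ?hij // big1 // => -[p1 p2] hp.
    have hne : (p1,p2) != (i,j) by apply: contraFneq hij => <-.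
    by rewrite mxE delta_entry (negbTE hne) mulr0.
Qed.

Definition cclosed n (C : {set place n}) :=
  forall a b d : 'I_n, (a,b) \in C -> (b,d) \in C -> (a,d) \in C.

Lemma br_closed (K : fieldType) n (S : {set place n}) (x y : 'M[K]_n) :
  cclosed S -> in_span K S x -> in_span K S y -> in_span K S (lie_br x y).
Proof.
move=> hC /span_iff hx /span_iff hy; apply/span_iff => i j hij.
have key : forall u v : 'M[K]_n, (forall i j, (i,j) \notin S -> u i j = 0) ->
  (forall i j, (i,j) \notin S -> v i j = 0) -> (u *m v) i j = 0.
  move=> u v hu hv; rewrite mxE; apply: big1 => k _.
  case hik: ((i,k) \in S); last by rewrite hu ?hik // mul0r.
  case hkj: ((k,j) \in S); last by rewrite hv ?hkj // mulr0.
  by move: hij; rewrite (hC _ _ _ hik hkj).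
have e : forall A B : 'M[K]_n, (A - B) i j = A i j - B i j by move=> A B; rewrite !mxE.
by rewrite /lie_br e (key x y) // (key y x) // subr0.
Qed.

Lemma span_sub (K : fieldType) n (S T : {set place n}) (x : 'M[K]_n) :
  S \subset T -> in_span K S x -> in_span K T x.
Proof.
move=> hST /span_iff hx; apply/span_iff => i j hij; apply: hx.
by apply: contra hij; apply: (subsetP hST).
Qed.

Lemma delta_span (K : fieldType) n (S : {set place n}) (i j : 'I_n) :
  (i,j) \in S -> in_span K S (delta_mx i j).
Proof.
move=> h; apply/span_iff => a b hab; rewrite delta_entry.
have -> : ((i,j) == (a,b)) = false by apply: contraNF hab => /eqP <-.
by [].
Qed.


Lemma inA n (a b : 'I_n) : ((a,b) \in Aset n) = (b < a)%N.
Proof. by rewrite inE. Qed.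

Lemma ideal_L (K : fieldType) n (M : {set place n}) (a b d : 'I_n) :
  is_lie_ideal K M (Aset n) -> (a,b) \in Aset n -> (b,d) \in M -> (a,d) \in M.
Proof.
move=> hM hab hbd; apply: contraT => nad.
have := (span_iff _ _).1 (hM.2 _ _ (delta_span K hab) (delta_span K hbd)) a d nad.
rewrite /lie_br mul_delta_mx mul_delta_mx_cond !mxE !eqxx.
have hba : (a == b) = false by rewrite eq_sym; apply: ltn_eqF; rewrite -inA.
case: (d == a); rewrite ?mulr0n ?mulr1n !mxE ?hba /=.
  by rewrite subr0 => /eqP; rewrite oner_eq0.
by rewrite subr0 => /eqP; rewrite oner_eq0.
Qed.

Lemma ideal_R (K : fieldType) n (M : {set place n}) (a b d : 'I_n) :
  is_lie_ideal K M (Aset n) -> (a,b) \in M -> (b,d) \in Aset n -> (a,d) \in M.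
Proof.
move=> hM hab hbd; apply: contraT => nad.
have := (span_iff _ _).1 (hM.2 _ _ (delta_span K hbd) (delta_span K hab)) a d nad.
rewrite /lie_br mul_delta_mx mul_delta_mx_cond !mxE !eqxx.
have hbd' : (d == b) = false by move: hbd; rewrite inA => /ltn_eqF.
case: (d == a); rewrite ?mulr0n ?mulr1n !mxE ?hbd' ?andbF /=.
  by rewrite add0r => /eqP; rewrite oppr_eq0 oner_eq0.
by rewrite add0r => /eqP; rewrite oppr_eq0 oner_eq0.
Qed.


Lemma mark_intro n (B : {set place n}) (k t c : 'I_n) :
  (t < c)%N -> (c < k)%N -> (k,c) \in B -> (c,t) \in B ->
  (k,c) \in marked B (k,t) /\ (c,t) \in marked B (k,t).
Proof.
move=> h1 h2 h3 h4; split; rewrite inE; apply/existsP; exists c;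
  by rewrite h1 h2 h3 h4 eqxx ?orbT.
Qed.

Lemma step_cases n (B : {set place n}) :
  step B = B \/ exists2 xi, xi \in B & step B = (B :\ xi) :\: marked B xi.
Proof.
rewrite /step /greatest; case: pickP => [xi /andP[hx _]|_]; last by left.
by right; exists xi.
Qed.

Lemma step_closed (K : fieldType) n (M B : {set place n}) (k t : 'I_n) :
  is_lie_ideal K M (Aset n) -> M \subset Aset n -> B \subset Aset n :\: M ->
  cclosed (B :|: M) -> (k,t) \in B ->
  cclosed (((B :\ (k,t)) :\: marked B (k,t)) :|: M).
Proof.
move=> hI hMA hB hC hxi a b d.
set B' := (B :\ (k,t)) :\: marked B (k,t).
have BA : forall p, p \in B -> p \in Aset n.
  by move=> p /(subsetP hB); rewrite in_setD => /andP[].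
have inA_of : forall p, p \in B :|: M -> p \in Aset n.
  by move=> p; rewrite in_setU => /orP[/BA //|/(subsetP hMA)].
have disj : forall p, p \in B -> p \notin M.
  by move=> p /(subsetP hB); rewrite in_setD => /andP[].
have B'B : forall p, p \in B' -> p \in B.
  by move=> p; rewrite in_setD in_setD1 => /andP[_ /andP[_ ->]].
have B'nm : forall p, p \in B' -> p \notin marked B (k,t).
  by move=> p; rewrite in_setD => /andP[].
have C'C : forall p, p \in B' :|: M -> p \in B :|: M.
  by move=> p; rewrite !in_setU => /orP[/B'B ->|->]; rewrite ?orbT.
have B'or : forall p, p \in B' :|: M -> p \notin M -> p \in B'.
  by move=> p; rewrite in_setU => /orP[//|-> //].
have xiM : (k,t) \notin M by apply: disj.
move=> hab hbd.
have had : (a,d) \in B :|: M := hC _ _ _ (C'C _ hab) (C'C _ hbd).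
rewrite in_setU; case hadM: ((a,d) \in M); first by rewrite orbT.
rewrite orbF.
have hadB : (a,d) \in B by move: had; rewrite in_setU hadM orbF.
have habM : (a,b) \notin M.
  apply/negP => h; move/negbT: hadM => /negP; apply.
  by apply: (ideal_R hI h); apply: inA_of; apply: C'C.
have hbdM : (b,d) \notin M.
  apply/negP => h; move/negbT: hadM => /negP; apply.
  by apply: (ideal_L hI _ h); apply: inA_of; apply: C'C.
have hab' := B'or _ hab habM.
have hbd' := B'or _ hbd hbdM.
have habA : (d < b)%N /\ (b < a)%N.
  by split; rewrite -inA; apply: BA; apply: B'B.
case: habA => hdb hba.
rewrite in_setD in_setD1 hadB andbT; apply/andP; split.
- apply/negP; rewrite inE => /existsP [c /and5P[htc hck hkc hct /orP[/eqP e|/eqP e]]];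
    case: e => ea ed; subst a d.
  +
    have hct' : (c,t) \in B :|: M by rewrite in_setU hct.
    have hbt : (b,t) \in B :|: M := hC _ _ _ (C'C _ hbd) hct'.
    have hbtB : (b,t) \in B.
      move: hbt; rewrite in_setU => /orP[//|h]; exfalso.
      by move/negP: xiM; apply; apply: (ideal_L hI _ h); apply: BA; apply: B'B.
    have := (mark_intro (ltn_trans htc hdb) hba (B'B _ hab') hbtB).1.
    by move/negP: (B'nm _ hab').
  +
    have hkc' : (k,c) \in B :|: M by rewrite in_setU hkc.
    have hkb : (k,b) \in B :|: M := hC _ _ _ hkc' (C'C _ hab).
    have hkbB : (k,b) \in B.
      move: hkb; rewrite in_setU => /orP[//|h]; exfalso.
      by move/negP: xiM; apply; apply: (ideal_R hI h); apply: BA; apply: B'B.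
    have := (mark_intro hdb (ltn_trans hba hck) hkbB (B'B _ hbd')).2.
    by move/negP: (B'nm _ hbd').
- apply/negP => /eqP [ea ed]; subst a d.
  have := (mark_intro hdb hba (B'B _ hab') (B'B _ hbd')).1.
  by move/negP: (B'nm _ hab').
Qed.


Lemma Bset_inv (K : fieldType) n (M : {set place n}) :
  is_lie_ideal K M (Aset n) -> M \subset Aset n ->
  forall i, Bset M i \subset Aset n :\: M /\ cclosed (Bset M i :|: M).
Proof.
move=> hI hMA; elim=> [|i [IHs IHc]].
- split; first by rewrite /Bset /=.
  rewrite /Bset /= => a b d.
  have toA : forall p, p \in (Aset n :\: M) :|: M -> p \in Aset n.
    by move=> p; rewrite in_setU in_setD => /orP[/andP[_ ->]|/(subsetP hMA)].
  move=> /toA; rewrite inA => h1 /toA; rewrite inA => h2.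
  rewrite in_setU in_setD inA (ltn_trans h2 h1) andbT.
  by case: ((a,d) \in M).
- have -> : Bset M i.+1 = step (Bset M i) by [].
  case: (step_cases (Bset M i)) => [->|[[k t] hxi ->]]; first by split.
  split; last by exact: (step_closed hI hMA IHs IHc hxi).
  apply: subset_trans IHs; apply/subsetP => p.
  by rewrite in_setD in_setD1 => /andP[_ /andP[_ ->]].
Qed.

End Helpers.

Theorem lemma1 (K : fieldType) (hK : [pchar K]%R =i pred0) (n : nat) (hn : (2 <= n)%N)
  (M : {set place n}) (hMA : M \subset Aset n)
  (hM : is_lie_ideal K M (Aset n)) :
  forall i : nat, (i <= nsteps M)%N ->
    is_lie_subalg K (Aiset M i) (Aset n) /\ is_lie_subalg K M (Aiset M i).
Proof.
move=> i _.
have [hs hc] := Bset_inv hM hMA i.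
have hMc : cclosed M.
  move=> a b d hab hbd; apply: (ideal_R hM hab); exact: (subsetP hMA).
split; split.
- move=> x; apply: span_sub; rewrite /Aiset subUset hMA andbT.
  apply: (subset_trans hs); apply/subsetP => p; rewrite in_setD => /andP[_  ?] //.
- by move=> x y; apply: br_closed.
- by move=> x; apply: span_sub; rewrite /Aiset subsetUr.
- by move=> x y; apply: br_closed.
Qed.
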